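(* For every $1\le k\le e-1$, the interval $[1,\lambda^k]$ equals $D_k$, and $\lambda^k$ is balanced, i.e. $[1,\lambda^k]=[1,\lambda^k]_r$.
   Context: Let $e\ge 2$, $n\ge 2$, $\zeta_e=e^{2\pi i/e}$. $G(e,e,n)$ is the group of $n\times n$ monomial matrices with nonzero entries $e$-th roots of unity whose product is $1$; $w[i,c]$ is the $(i,c)$ entry. For $i\in\mathbb{Z}/e\mathbb{Z}$, $t_i$ is the matrix with $(1,2)$ entry $\zeta_e^{-i}$, $(2,1)$ entry $\zeta_e^{i}$, $(j,j)$ entry $1$ for $3\le j\le n$, other entries $0$; for $3\le j\le n$, $s_j$ is the permutation matrix of the transposition $(j-1\ j)$. $X=\{t_0,\dots,t_{e-1},s_3,\dots,s_n\}$ and $\ell$ is the word length with respect to $X$. For $u,w\in G(e,e,n)$ write $u\preceq w$ if $\ell(u)+\ell(u^{-1}w)=\ell(w)$, and $u\preceq_r w$ if $\ell(wu^{-1})+\ell(u)=\ell(w)$. For $g\in G(e,e,n)$, $[1,g]=\{w: w\preceq g\}$ and $[1,g]_r=\{w: w\preceq_r g\}$; $g$ is balanced if $[1,g]=[1,g]_r$. Let $\lambda$ be the diagonal matrix $\mathrm{diag}(\zeta_e^{-(n-1)},\zeta_e,\dots,\zeta_e)\in G(e,e,n)$. For $w\in G(e,e,n)$, a nonzero entry $w[i,c]$ is called a bullet if there is no nonzero entry $w[i',c']$ with $i'<i$ and $c'<c$. For $1\le k\le e-1$, $D_k$ is the set of $w\in G(e,e,n)$ such that every nonzero entry of $w$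 that is not a bullet is equal to $1$ or to $\zeta_e^{k}$. *)

(* Defs.v *)
From HB Require Import structures.
From mathcomp Require Import all_boot all_order all_algebra all_fingroup.
Set Implicit Arguments. Unset Strict Implicit. Unset Printing Implicit Defensive.
Import GRing.Theory.
Local Open Scope ring_scope.

(* Encoding of the monomial matrices of size n with nonzero entries e-th roots
   of unity: a pair (sigma, a) stands for the matrix w with
   w[i, sigma i] = zeta_e ^ (a i) and all other entries 0.
   Rows/columns are 0-based ordinals 'I_n (row i here = row i+1 of the paper). *)
Definition mon (e n : nat) := ({perm 'I_n} * {ffun 'I_n -> 'Z_e})%type.

(* entry w i c : None for a zero entry, Some a for the entry zeta_e ^ a *)
Definition entry (e n : nat) (w : mon e n) (i c : 'I_n) : option 'Z_e :=
  if w.1 i == c then Some (w.2 i) else None.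

(* matrix product: (uv)[i,c] = u[i, su i] v[su i, c] *)
Definition mmul (e n : nat) (u v : mon e n) : mon e n :=
  ((u.1 * v.1)%g, [ffun i => u.2 i + v.2 (u.1 i)]).

Definition mone (e n : nat) : mon e n := (1%g, [ffun => 0]).

Definition minv (e n : nat) (u : mon e n) : mon e n :=
  ((u.1^-1)%g, [ffun j => - u.2 ((u.1^-1)%g j)]).

(* membership in G(e,e,n): product of the nonzero entries equals 1 *)
Definition inG (e n : nat) (w : mon e n) : bool := \sum_i w.2 i == 0.

(* transposition of the (1-based) positions a and b *)
Definition tp (n a b : nat) : {perm 'I_n} :=
  match insub a.-1, insub b.-1 with
  | Some x, Some y => tperm x y
  | _, _ => 1%g
  end.

(* t_i : (1,2) entry zeta^{-i}, (2,1) entry zeta^i, (j,j) entry 1 for j >= 3 *)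
Definition tgen (e n : nat) (i : 'Z_e) : mon e n :=
  (tp n 1 2, [ffun r : 'I_n => if val r == 0%N then - i
                               else if val r == 1%N then i else 0]).

Definition sgen (e n : nat) (j : nat) : mon e n := (tp n j.-1 j, [ffun => 0]).

Definition isgen (e n : nat) (x : mon e n) : bool :=
  [exists i : 'Z_e, x == tgen n i] ||
  [exists j : 'I_n.+1, (3 <= j)%N && (x == sgen e n j)].

Definition wprod (e n : nat) (s : seq (mon e n)) : mon e n :=
  foldr (@mmul e n) (mone e n) s.

Definition wlen (e n : nat) (w : mon e n) (m : nat) : Prop :=
  (exists s : seq (mon e n), all (@isgen e n) s /\ wprod s = w /\ size s = m) /\
  (forall s : seq (mon e n), all (@isgen e n) s -> wprod s = w -> (m <= size s)%N).

Definition preceq (e n : nat) (u w : mon e n) : Prop :=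
  exists a b c, wlen u a /\ wlen (mmul (minv u) w) b /\ wlen w c /\ (a + b = c)%N.

Definition preceq_r (e n : nat) (u w : mon e n) : Prop :=
  exists a b c, wlen (mmul w (minv u)) a /\ wlen u b /\ wlen w c /\ (a + b = c)%N.

(* lambda = diag(zeta^{-(n-1)}, zeta, ..., zeta) *)
Definition lambda (e n : nat) : mon e n :=
  (1%g, [ffun r : 'I_n => if val r == 0%N then - ((n - 1)%:R) else 1]).

Definition mpow (e n : nat) (w : mon e n) (k : nat) : mon e n :=
  iter k (mmul w) (mone e n).

Definition bullet (e n : nat) (w : mon e n) (i c : 'I_n) : bool :=
  (entry w i c != None) &&
  [forall i' : 'I_n, forall c' : 'I_n,
     ~~ [&& (i' < i)%N, (c' < c)%N & entry w i' c' != None]].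

Definition inD (e n k : nat) (w : mon e n) : bool :=
  inG w &&
  [forall i : 'I_n, forall c : 'I_n,
     ((entry w i c != None) && ~~ bullet w i c) ==>
     ((entry w i c == Some 0) || (entry w i c == Some (k%:R)))].

(* Main.v *)
Require Import Defs.
From mathcomp Require Import all_boot all_order all_algebra all_fingroup.
From mathcomp Require Import zify.
Set Implicit Arguments. Unset Strict Implicit. Unset Printing Implicit Defensive.

Import GRing.Theory.

Section S.
Variables (e n : nat).
Local Notation M := (mon e n).

Definition hh (s : {perm 'I_n}) (a : {ffun 'I_n -> 'Z_e}) (j i : 'I_n) : nat :=
  if a i == 0%R then nat_of_bool (nat_of_ord (s i) < s j) else (nat_of_ord (s j) < s i).+1.

Definition FF (x : M) : nat :=
  \sum_(i : 'I_n) \sum_(j : 'I_n) (nat_of_ord j < i) * hh x.1 x.2 j i.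

Lemma sum_delta (f : 'I_n -> nat) p : \sum_j (j == p) * f j = f p.
Proof. rewrite (bigD1 p) //= eqxx mul1n big1 ?addn0 // => j /negPf ->. by []. Qed.

Lemma sum_delta2 (H : 'I_n -> 'I_n -> nat) r s :
  \sum_i \sum_j ((j == r) && (i == s)) * H j i = H r s.
Proof.
rewrite -(sum_delta (fun i => H r i) s); apply: eq_bigr => i _.
case: (i == s); last by rewrite mul0n big1 // => j _; rewrite andbF.
by rewrite mul1n -(sum_delta (fun j => H j i) r); apply: eq_bigr => j _; rewrite andbT.
Qed.

Lemma tperm_lt (p q j i : 'I_n) : nat_of_ord q = (nat_of_ord p).+1 ->
  (nat_of_ord (tperm p q j) < tperm p q i) + ((j == p) && (i == q)) =
  (nat_of_ord j < i) + ((j == q) && (i == p)).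
Proof.
move=> hpq.
have npq : p != q by rewrite -val_eqE /= hpq; lia.
case: (eqVneq j p) => [->|hjp]; [|case: (eqVneq j q) => [->|hjq]];
case: (eqVneq i p) => [->|hip]; try (case: (eqVneq i q) => [->|hiq]);
rewrite ?tpermL ?tpermR ?tpermD 1?eq_sym ?eqxx ?(negPf npq) ?(negPf hjp) ?(negPf hjq) ?(negPf hip) ?(negPf hiq) //= ?andbF ?andbT //;
try (rewrite eq_sym; done);
try (move: hjp); try (move: hjq); try (move: hip); try (move: hiq); rewrite -?val_eqE /=; try lia.
Qed.

Lemma perm_step (s : {perm 'I_n}) (a : {ffun 'I_n -> 'Z_e}) (p q : 'I_n) :
  nat_of_ord q = (nat_of_ord p).+1 ->
  FF ((tperm p q * s)%g, [ffun r => a (tperm p q r)]) + hh s a p q =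
  FF (s, a) + hh s a q p.
Proof.
move=> hpq; rewrite /FF /=.
rewrite (reindex_inj (@perm_inj _ (tperm p q))) /=.
under eq_bigr => i _ do rewrite (reindex_inj (@perm_inj _ (tperm p q))) /=.
have E : forall j i, hh (tperm p q * s) [ffun r => a (tperm p q r)] (tperm p q j) (tperm p q i)
   = hh s a j i by move=> j i; rewrite /hh !ffunE !permM !tpermK.
under eq_bigr => i _ do under eq_bigr => j _ do rewrite E.
rewrite -(sum_delta2 (hh s a) p q) -(sum_delta2 (hh s a) q p) -!big_split.
apply: eq_bigr => i _; rewrite -!big_split; apply: eq_bigr => j _.
by rewrite /= -!mulnDl tperm_lt.
Qed.

Lemma exp_change (s : {perm 'I_n}) (a a' : {ffun 'I_n -> 'Z_e}) (o0 o1 : 'I_n) :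
  nat_of_ord o0 = 0 -> nat_of_ord o1 = 1 -> (forall r : 'I_n, 1 < r -> a' r = a r) ->
  FF (s, a') + hh s a o0 o1 = FF (s, a) + hh s a' o0 o1.
Proof.
move=> h0 h1 ha; rewrite /FF /=.
rewrite -(sum_delta2 (hh s a) o0 o1) -(sum_delta2 (hh s a') o0 o1) -!big_split.
apply: eq_bigr => i _; rewrite -!big_split; apply: eq_bigr => j _ /=.
case: (ltnP 1 i) => hi.
  by rewrite /hh ha // addnC.
have -> : (nat_of_ord j < i) = (j == o0) && (i == o1).
  by rewrite -!val_eqE /= h0 h1; lia.
by rewrite addnC.
Qed.

Lemma hh_swap (s : {perm 'I_n}) (a a' : {ffun 'I_n -> 'Z_e}) (j i : 'I_n) :
  j != i -> hh s a' i j <= hh s a j i + 1.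
Proof.
move=> hji.
have : nat_of_ord (s j) != s i by rewrite val_eqE (inj_eq perm_inj).
rewrite /hh; case: (a' j == 0%R); case: (a i == 0%R); lia.
Qed.


Lemma tp_eq (a b : nat) (x y : 'I_n) : nat_of_ord x = a.-1 -> nat_of_ord y = b.-1 ->
  tp n a b = tperm x y.
Proof. by move=> hx hy; rewrite /tp -hx -hy !valK. Qed.

Hypothesis hn : 1 < n.
Definition o0 : 'I_n := Ordinal (ltnW hn).
Definition o1 : 'I_n := Ordinal hn.

Definition texp (b : 'Z_e) : {ffun 'I_n -> 'Z_e} :=
  [ffun r : 'I_n => if nat_of_ord r == 0 then - b else if nat_of_ord r == 1 then b else 0]%R.

Lemma tgenE b : tgen n b = (tperm o0 o1, texp b).
Proof. by rewrite /tgen (@tp_eq 1 2 o0 o1). Qed.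

Definition aprime (b : 'Z_e) (a : {ffun 'I_n -> 'Z_e}) : {ffun 'I_n -> 'Z_e} :=
  [ffun r => texp b (tperm o0 o1 r) + a r]%R.

Lemma t_step (b : 'Z_e) (s : {perm 'I_n}) (a : {ffun 'I_n -> 'Z_e}) :
  FF (mmul (tgen n b) (s, a)) + hh s a o0 o1 = FF (s, a) + hh s (aprime b a) o1 o0.
Proof.
have E : mmul (tgen n b) (s, a) = ((tperm o0 o1 * s)%g, [ffun r => aprime b a (tperm o0 o1 r)]).
  rewrite tgenE /mmul /=; congr pair; apply/ffunP => r; by rewrite !ffunE tpermK.
have h1 : nat_of_ord o1 = (nat_of_ord o0).+1 by [].
have P := perm_step s (aprime b a) h1.
have X := @exp_change s a (aprime b a) o0 o1 erefl erefl.
have X' : FF (s, aprime b a) + hh s a o0 o1 = FF (s, a) + hh s (aprime b a) o0 o1.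
  apply: X => r hr; rewrite /aprime ffunE tpermD; last first.
  - by rewrite -val_eqE /=; lia.
  - by rewrite -val_eqE /=; lia.
  by rewrite /texp ffunE ifF ?ifF ?add0r //; apply/eqP; lia.
rewrite E; lia.
Qed.

Lemma s_step (j : nat) (p q : 'I_n) (s : {perm 'I_n}) (a : {ffun 'I_n -> 'Z_e}) :
  nat_of_ord p = j.-2 -> nat_of_ord q = j.-1 -> 2 <= j ->
  FF (mmul (sgen e n j) (s, a)) + hh s a p q = FF (s, a) + hh s a q p.
Proof.
move=> hp hq hj.
have E : mmul (sgen e n j) (s, a) = ((tperm p q * s)%g, [ffun r => a (tperm p q r)]).
  rewrite /sgen (@tp_eq j.-1 j p q) // /mmul /=; congr pair; apply/ffunP => r.
  by rewrite !ffunE add0r.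
rewrite E; apply: perm_step; lia.
Qed.


Lemma isgen_t b : isgen (tgen n b : M).
Proof. by apply/orP; left; apply/existsP; exists b. Qed.

Lemma isgen_s j : 3 <= j -> j <= n -> isgen (sgen e n j).
Proof.
move=> h3 hjn; apply/orP; right; apply/existsP.
have hj : j < n.+1 by lia.
by exists (Ordinal hj); rewrite /= h3 eqxx.
Qed.

Lemma texp_inv b r : (texp b r + texp b (tperm o0 o1 r) = 0)%R.
Proof.
case: (eqVneq r o0) => [->|h0].
  by rewrite tpermL /texp !ffunE /= addNr.
case: (eqVneq r o1) => [->|h1].
  by rewrite tpermR /texp !ffunE /= addrN.
rewrite tpermD 1?eq_sym //.
move: h0 h1; rewrite -!val_eqE /= => h0 h1.
by rewrite /texp ffunE (negPf h0) (negPf h1) addr0.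
Qed.

Lemma tp2 a b : (tp n a b * tp n a b = 1)%g.
Proof.
rewrite /tp; case: insub => [x|]; last by rewrite mulg1.
case: insub => [y|]; last by rewrite mulg1.
by rewrite tperm2.
Qed.

Lemma gen_inv (g x : M) : isgen g -> mmul g (mmul g x) = x.
Proof.
case: x => s a.
move=> /orP [/existsP [b /eqP ->] | /existsP [j /andP [hj /eqP ->]]].
  rewrite tgenE /mmul /=; congr pair.
    by rewrite mulgA tperm2 mul1g.
  apply/ffunP => r; have T := texp_inv b r; rewrite /texp !ffunE in T; by rewrite !ffunE tpermK addrA T add0r.
rewrite /sgen /mmul /=; congr pair.
  by rewrite mulgA tp2 mul1g.
by apply/ffunP => r; rewrite !ffunE !add0r -permM tp2 perm1.
Qed.

Lemma inG_mmul (u v : M) : inG u -> inG v -> inG (mmul u v).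
Proof.
rewrite /inG /mmul /= => /eqP hu /eqP hv.
under eq_bigr => i _ do rewrite ffunE.
rewrite big_split /= hu add0r.
have -> : (\sum_i v.2 (u.1 i) = \sum_i v.2 i)%R.
  by apply: esym; apply: (reindex_inj (@perm_inj _ u.1)).
by rewrite hv.
Qed.

Lemma inG_minv (u : M) : inG u -> inG (minv u).
Proof.
rewrite /inG /minv /= => /eqP hu.
under eq_bigr => i _ do rewrite ffunE.
rewrite sumrN.
have -> : (\sum_i u.2 (u.1^-1%g i) = \sum_i u.2 i)%R.
  by apply: esym; apply: (reindex_inj (@perm_inj _ (u.1^-1)%g)).
by rewrite hu oppr0.
Qed.

Lemma inG_gen (g : M) : isgen g -> inG g.
Proof.
move=> /orP [/existsP [b /eqP ->] | /existsP [j /andP [hj /eqP ->]]].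
  rewrite tgenE /inG /= (bigD1 o0) // (bigD1 o1) //= big1.
    by rewrite /texp !ffunE /= addr0 addNr.
  move=> r /andP [h1 h0]; move: h0 h1; rewrite -!val_eqE /= => h0 h1.
  by rewrite /texp ffunE (negPf h0) (negPf h1).
by rewrite /inG /= big1 // => r _; rewrite ffunE.
Qed.

Lemma step_le (g x : M) : isgen g -> FF (mmul g x) <= FF x + 1.
Proof.
case: x => s a.
move=> /orP [/existsP [b /eqP ->] | /existsP [j /andP [hj /eqP ->]]].
  have := t_step b s a.
  have : o0 != o1 by rewrite -val_eqE.
  move/(@hh_swap s a (aprime b a) o0 o1); lia.
have hjn := ltn_ord j.
have hp : j.-2 < n by lia.
have hq : j.-1 < n by lia.
have := @s_step j (Ordinal hp) (Ordinal hq) s a erefl erefl (ltnW hj).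
have : Ordinal hp != Ordinal hq by rewrite -val_eqE /=; lia.
move/(@hh_swap s a a); lia.
Qed.


Lemma FF_mone : FF (mone e n) = 0.
Proof.
rewrite /FF big1 // => i _; rewrite big1 // => j _.
rewrite /hh /= ffunE eqxx !perm1.
by case: ltnP => h //=; rewrite ltnNge ltnW.
Qed.

Lemma incr_perm (s : {perm 'I_n}) :
  (forall m (Hm : m.+1 < n), nat_of_ord (s (Ordinal (ltnW Hm))) < s (Ordinal Hm)) -> s = 1%g.
Proof.
move=> H.
have up : forall m (Hm : m < n), m <= s (Ordinal Hm).
  elim=> [|m IH] Hm //.
  have := IH (ltnW Hm); have := H m Hm; lia.
have down : forall d m (Hm : m < n), m + d = n.-1 -> s (Ordinal Hm) <= m.
  elim=> [|d IH] m Hm hd.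
    have := ltn_ord (s (Ordinal Hm)); lia.
  have Hm2 : m.+1 < n by lia.
  have := IH m.+1 Hm2 ltac:(lia).
  have := H m Hm2.
  have -> : Ordinal Hm = Ordinal (ltnW Hm2) by apply: val_inj.
  lia.
apply/permP => [[m Hm]]; rewrite perm1; apply: val_inj => /=.
have := up m Hm; have := down (n.-1 - m) m Hm ltac:(lia); lia.
Qed.

Lemma descent_none (x : M) : inG x ->
  (forall g : M, isgen g -> FF x <= FF (mmul g x)) -> x = mone e n.
Proof.
case: x => s a hG hall.
have base : a o1 = 0%R /\ nat_of_ord (s o0) < s o1.
  have E : aprime (- a o0)%R a o0 = 0%R.
    by rewrite /aprime /texp !ffunE tpermL /= addNr.
  have := t_step (- a o0)%R s a.
  have := hall _ (isgen_t (- a o0)%R).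
  have : nat_of_ord (s o0) != s o1 by rewrite val_eqE (inj_eq perm_inj) -val_eqE.
  rewrite /hh E eqxx; case: (eqVneq (a o1) 0%R) => [->|_] /= h1 h2 h3; [split => //; lia | exfalso; lia].
have C : forall m (Hm : m.+1 < n), a (Ordinal Hm) = 0%R /\
    nat_of_ord (s (Ordinal (ltnW Hm))) < s (Ordinal Hm).
  elim=> [|m IH] Hm.
    have -> : Ordinal Hm = o1 by apply: val_inj.
    by have -> : Ordinal (ltnW Hm) = o0 by apply: val_inj.
  have [h1 _] := IH (ltnW Hm).
  have := @s_step m.+3 (Ordinal (ltnW Hm)) (Ordinal Hm) s a erefl erefl erefl.
  have := hall _ (@isgen_s m.+3 erefl ltac:(lia)).
  have : nat_of_ord (s (Ordinal (ltnW Hm))) != s (Ordinal Hm).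
    by rewrite val_eqE (inj_eq perm_inj) -val_eqE /=; lia.
  rewrite /hh h1 eqxx; case: (eqVneq (a (Ordinal Hm)) 0%R) => [->|_] /= g1 g2 g3; [split => //; lia | exfalso; lia].
have hs : s = 1%g by apply: incr_perm => m Hm; case: (C m Hm).
have ha : forall i : 'I_n, nat_of_ord i != 0 -> a i = 0%R.
  by case=> [[|m] Hm] //= _; case: (C m Hm).
have ha0 : a o0 = 0%R.
  move: hG; rewrite /inG /= (bigD1 o0) //= big1 ?addr0 => [/eqP //|i hi].
  by apply: ha; move: hi; rewrite -val_eqE.
rewrite hs /mone; congr pair; apply/ffunP => i; rewrite ffunE.
case: (eqVneq (nat_of_ord i) 0) => [h|h]; last exact: ha.
by have -> : i = o0 by apply: val_inj.
Qed.

Lemma descent (x : M) : inG x -> x != mone e n ->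
  exists2 g : M, isgen g & FF (mmul g x) < FF x.
Proof.
move=> hG hne.
case: (boolP [exists g : M, isgen g && (FF (mmul g x) < FF x)]).
  by move=> /existsP [g /andP [h1 h2]]; exists g.
move=> /existsPn hno; case/eqP: hne; apply: descent_none => // g hg.
by have := hno g; rewrite hg /= -leqNgt.
Qed.

Lemma lower_bound (w : seq M) : all (@isgen e n) w -> FF (wprod w) <= size w.
Proof.
elim: w => [|g w IH] /=; first by rewrite FF_mone.
move=> /andP [hg hw]; have := step_le (wprod w) hg; have := IH hw; lia.
Qed.

Lemma exists_word m : forall x : M, FF x <= m -> inG x ->
  exists w : seq M, [/\ all (@isgen e n) w, wprod w = x & size w <= FF x].
Proof.
elim: m => [|m IH] x hx hG; case: (eqVneq x (mone e n)) => [->|hne];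
  try (by exists [::]).
  by have [g _] := descent hG hne; lia.
have [g hg hlt] := descent hG hne.
have [w [h1 h2 h3]] := IH (mmul g x) ltac:(lia) (inG_mmul (inG_gen hg) hG).
exists (g :: w); split => /=.
- by rewrite hg h1.
- by rewrite h2 gen_inv.
- lia.
Qed.

Lemma wlenFF (x : M) : inG x -> wlen x (FF x).
Proof.
move=> hG; split.
  have [w [h1 h2 h3]] := exists_word (leqnn (FF x)) hG.
  exists w; split => //; split => //.
  have := lower_bound h1; rewrite h2; lia.
by move=> w hw <-; apply: lower_bound.
Qed.

Lemma wlen_uniq (x : M) a b : wlen x a -> wlen x b -> a = b.
Proof.
move=> [[w1 [h1 [h2 h3]]] m1] [[w2 [g1 [g2 g3]]] m2].
have := m1 _ g1 g2; have := m2 _ h1 h2; lia.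
Qed.

Lemma wlenE (x : M) m : inG x -> wlen x m <-> m = FF x.
Proof.
move=> hG; split; first by move/wlen_uniq; apply; apply: wlenFF.
by move=> ->; apply: wlenFF.
Qed.


Definition Lexp (k : nat) : {ffun 'I_n -> 'Z_e} := [ffun r => ((lambda e n).2 r *+ k)%R].

Lemma mpowE k : mpow (lambda e n) k = (1%g, Lexp k).
Proof.
rewrite /Lexp; elim: k => [|k IH].
  by rewrite /mpow /= /mone; congr pair; apply/ffunP => r; rewrite !ffunE mulr0n.
rewrite /mpow /= -/(mpow _ _) IH /mmul /=; congr pair.
  by rewrite mulg1.
by apply/ffunP => r; rewrite !ffunE perm1 mulrS.
Qed.

Lemma inG_L k : inG (mpow (lambda e n) k).
Proof.
rewrite mpowE /inG /Lexp /=.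
under eq_bigr => i _ do rewrite ffunE.
rewrite sumrMnl.
have -> : (\sum_i (lambda e n).2 i = 0)%R; last by rewrite mul0rn.
rewrite (bigD1 o0) //= ffunE /=.
rewrite (eq_bigr (fun=> 1%R)) => [|i hi]; last first.
  rewrite ffunE ifF //; apply/eqP => h; move: hi; by rewrite -val_eqE /= h.
by rewrite sumr_const cardC1 card_ord subn1 addNr.
Qed.


Lemma sym_sum (f g : 'I_n -> 'I_n -> nat) :
  (forall i j, f j i + f i j = g j i + g i j) ->
  \sum_i \sum_j f j i = \sum_i \sum_j g j i.
Proof.
move=> H.
have D : forall h : 'I_n -> 'I_n -> nat,
  (\sum_i \sum_j h j i) + (\sum_i \sum_j h j i) = \sum_i \sum_j (h j i + h i j).
  move=> h; rewrite {2}exchange_big /=.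
  by rewrite -big_split /=; apply: eq_bigr => i _; rewrite -big_split.
have := D f; have := D g.
have -> : \sum_i \sum_j (f j i + f i j) = \sum_i \sum_j (g j i + g i j).
  by apply: eq_bigr => i _; apply: eq_bigr => j _; apply: H.
lia.
Qed.

Definition hp (c : 'I_n -> 'Z_e) (j i : 'I_n) : nat :=
  if c i == 0%R then nat_of_bool (nat_of_ord i < j) else (nat_of_ord j < i).+1.

Lemma FFinv (s : {perm 'I_n}) (y : M) : (forall i, y.1 (s i) = i) ->
  FF y = \sum_i \sum_j (nat_of_ord (s j) < s i) * hp (fun i => y.2 (s i)) j i.
Proof.
move=> hy; rewrite /FF (reindex_inj (@perm_inj _ s)) /=.
apply: eq_bigr => i _; rewrite (reindex_inj (@perm_inj _ s)) /=.
by apply: eq_bigr => j _; rewrite /hh /hp !hy.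
Qed.

Definition bad (k : nat) (x : M) (j i : 'I_n) : bool :=
  [&& nat_of_ord j < i, nat_of_ord (x.1 j) < x.1 i, x.2 i != 0%R & x.2 i != (k%:R)%R].

Lemma pair_pw (k : nat) (hk : ((k%:R)%R : 'Z_e) != 0%R) (x : M) (c : 'I_n -> 'Z_e)
  (hc : forall i, nat_of_ord i != 0 -> nat_of_ord (x.1 i) != 0 -> c i = (k%:R - x.2 i)%R)
  (j i : 'I_n) : nat_of_ord j < i ->
  ((nat_of_ord j < i) * hh x.1 x.2 j i + (nat_of_ord (x.1 j) < x.1 i) * hp c j i) +
  ((nat_of_ord i < j) * hh x.1 x.2 i j + (nat_of_ord (x.1 i) < x.1 j) * hp c i j) =
  ((nat_of_ord j < i) * 2 + 2 * bad k x j i) + ((nat_of_ord i < j) * 2 + 2 * bad k x i j).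
Proof.
case: x hc => s a hc /= hji.
have hne : nat_of_ord (s j) != s i.
  rewrite val_eqE (inj_eq perm_inj) -val_eqE /=; lia.
rewrite /bad /hh /hp /= hji.
have -> : (nat_of_ord i < j) = false by rewrite ltnNge ltnW.
case: (ltngtP (nat_of_ord (s j)) (s i)) => hs; last by rewrite hs eqxx in hne.
  have hci := hc i ltac:(lia) ltac:(rewrite /=; lia).
  rewrite hci subr_eq0 /=.
  case: (eqVneq (a i) 0%R) => [->|h0].
    by rewrite (negPf hk) /=; lia.
  rewrite [_ == a i]eq_sym; case: (a i == (k%:R)%R) => /=; lia.
rewrite /=; case: (c j == 0%R); case: (a i == 0%R); rewrite /= ?andbF; lia.
Qed.


Lemma key (k : nat) (hk : ((k%:R)%R : 'Z_e) != 0%R) (x : M) (c : 'I_n -> 'Z_e)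
  (hc : forall i, nat_of_ord i != 0 -> nat_of_ord (x.1 i) != 0 -> c i = (k%:R - x.2 i)%R) :
  \sum_(i : 'I_n) \sum_(j : 'I_n) ((nat_of_ord j < i) * hh x.1 x.2 j i + (nat_of_ord (x.1 j) < x.1 i) * hp c j i)
  = \sum_(i : 'I_n) \sum_(j : 'I_n) ((nat_of_ord j < i) * 2 + 2 * bad k x j i).
Proof.
apply: (@sym_sum (fun j i : 'I_n => (nat_of_ord j < i) * hh x.1 x.2 j i + (nat_of_ord (x.1 j) < x.1 i) * hp c j i)
  (fun j i : 'I_n => (nat_of_ord j < i) * 2 + 2 * bad k x j i)) => i j /=.
move: (@pair_pw k hk x c hc j i) (@pair_pw k hk x c hc i j).
case H1 : (nat_of_ord j < i); first by move=> P1 _; apply: P1.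
case H2 : (nat_of_ord i < j).
  by move=> _ P2; rewrite addnC [X in _ = X]addnC; apply: P2.
move=> _ _.
have -> : j = i by apply: val_inj; move/negbT: H1; move/negbT: H2; rewrite -!leqNgt /=; lia.
by rewrite /bad !ltnn.
Qed.

Definition Bad (k : nat) (x : M) : nat := \sum_i \sum_j bad k x j i.

Lemma Lexp_ne0 k (i : 'I_n) : nat_of_ord i != 0 -> Lexp k i = (k%:R)%R.
Proof. by move=> h; rewrite /Lexp !ffunE /= (negPf h). Qed.

Lemma FF_L (k : nat) (hk : ((k%:R)%R : 'Z_e) != 0%R) :
  FF (1%g, Lexp k) = \sum_(i : 'I_n) \sum_(j : 'I_n) ((nat_of_ord j < i) * 2).
Proof.
rewrite /FF; apply: eq_bigr => i _; apply: eq_bigr => j _ /=.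
case: (ltnP (nat_of_ord j) i) => h //=.
rewrite /hh Lexp_ne0 ?(negPf hk); last by lia. rewrite !permE /= h. done.
Qed.

Lemma sum_split2 (k : nat) (x : M) :
  \sum_(i : 'I_n) \sum_(j : 'I_n) ((nat_of_ord j < i) * 2 + 2 * bad k x j i)
  = \sum_(i : 'I_n) \sum_(j : 'I_n) ((nat_of_ord j < i) * 2) + 2 * Bad k x.
Proof.
rewrite /Bad big_distrr -big_split /=; apply: eq_bigr => i _.
by rewrite big_distrr -big_split.
Qed.

Lemma main_eq1 (k : nat) (hk : ((k%:R)%R : 'Z_e) != 0%R) (w : M) :
  FF w + FF (mmul (minv w) (mpow (lambda e n) k)) = FF (mpow (lambda e n) k) + 2 * Bad k w.
Proof.
rewrite mpowE FF_L // -sum_split2.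
rewrite (@FFinv w.1 (mmul (minv w) (1%g, Lexp k))); last first.
  move=> i; rewrite /mmul /minv /=. first [by rewrite mulg1 permK | by rewrite permM perm1 permK | by rewrite !permE /= permK | idtac].
rewrite -(@key k hk w (fun i => (mmul (minv w) (1%g, Lexp k)).2 (w.1 i))); last first.
  move=> i hi _; rewrite /mmul /minv /= !ffunE permK.
  have hi' : (val i == 0%N) = false by exact: negbTE hi.
  by rewrite hi' addrC.
rewrite /FF -big_split /=; apply: eq_bigr => i _; by rewrite -big_split.
Qed.

Lemma main_eq2 (k : nat) (hk : ((k%:R)%R : 'Z_e) != 0%R) (w : M) :
  FF (mmul (mpow (lambda e n) k) (minv w)) + FF w = FF (mpow (lambda e n) k) + 2 * Bad k w.
Proof.
rewrite addnC mpowE FF_L // -sum_split2.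
rewrite (@FFinv w.1 (mmul (1%g, Lexp k) (minv w))); last first.
  move=> i; rewrite /mmul /minv /=. first [by rewrite mul1g permK | by rewrite permM perm1 permK | by rewrite !permE /= permK | idtac].
rewrite -(@key k hk w (fun i => (mmul (1%g, Lexp k) (minv w)).2 (w.1 i))); last first.
  move=> i _ hi; rewrite /mmul /minv /= !ffunE.
  have -> : (1%g : {perm 'I_n}) (w.1 i) = w.1 i by first [rewrite perm1 | rewrite permE].
  have hi' : (val (w.1 i) == 0%N) = false by exact: negbTE hi.
  by rewrite hi' permK.
rewrite /FF -big_split /=; apply: eq_bigr => i _; by rewrite -big_split.
Qed.


Lemma Bad0 (k : nat) (x : M) : Bad k x = 0 <-> (forall i j, ~~ bad k x j i).
Proof.
split.
  move=> h i j; apply/negP => hb; move: h; rewrite /Bad (bigD1 i) //= (bigD1 j) //= hb.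
  by [].
by move=> h; rewrite /Bad big1 // => i _; rewrite big1 // => j _; rewrite (negPf (h i j)).
Qed.

Lemma inD_iff (k : nat) (w : M) : inG w -> (inD k w <-> (forall i j, ~~ bad k w j i)).
Proof.
move=> hG; rewrite /inD hG /=; split.
  move=> /forallP H i j; apply/negP => /and4P [h1 h2 h3 h4].
  move: (H i) => /forallP /(_ (w.1 i)) /implyP.
  have S : forall x y : 'Z_e, (Some x == Some y) = (x == y) by [].
  rewrite /entry eqxx !S (negPf h3) (negPf h4) /= => H'.
  suff hb : ~~ bullet w i (w.1 i) by have := H' hb.
  rewrite /bullet negb_and; apply/orP; right.
  apply/forallPn; exists j; apply/forallPn; exists (w.1 j); rewrite negbK /entry eqxx.
  by rewrite h1 h2.
move=> H; apply/forallP => i; apply/forallP => c; apply/implyP => /andP [hE hB].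
move: hE hB; rewrite /bullet /entry; case: (eqVneq (w.1 i) c) => [<-|] //= _.
move=> /forallPn [i' /forallPn [c' /negPn /and3P [h1 h2]]].
case: (eqVneq (w.1 i') c') => [hc'|] //= _.
have := H i i'; rewrite /bad h1 hc' h2 /=.
have S : forall x y : 'Z_e, (Some x == Some y) = (x == y) by [].
by rewrite !S negb_and !negbK.
Qed.

Lemma preceqE (u v : M) : inG u -> inG v ->
  preceq u v <-> FF u + FF (mmul (minv u) v) = FF v.
Proof.
move=> hu hv; have hy := inG_mmul (inG_minv hu) hv.
split.
  move=> [a [b [c [h1 [h2 [h3 h4]]]]]].
  by move: h1 h2 h3; rewrite !wlenE // => E1 E2 E3; rewrite -E1 -E2 -E3.
move=> h; exists (FF u), (FF (mmul (minv u) v)), (FF v).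
by split; [|split; [|split]] => //; apply: wlenFF.
Qed.

Lemma preceq_rE (u v : M) : inG u -> inG v ->
  preceq_r u v <-> FF (mmul v (minv u)) + FF u = FF v.
Proof.
move=> hu hv; have hy := inG_mmul hv (inG_minv hu).
split.
  move=> [a [b [c [h1 [h2 [h3 h4]]]]]].
  by move: h1 h2 h3; rewrite !wlenE // => E1 E2 E3; rewrite -E1 -E2 -E3.
move=> h; exists (FF (mmul v (minv u))), (FF u), (FF v).
by split; [|split; [|split]] => //; apply: wlenFF.
Qed.

End S.

Theorem mainTheorem5 (e n : nat) (he : (2 <= e)%N) (hn : (2 <= n)%N)
  (k : nat) (hk1 : (1 <= k)%N) (hk2 : (k <= e - 1)%N) :
  (forall w : mon e n, inG w -> (preceq w (mpow (lambda e n) k) <-> inD k w)) /\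
  (forall w : mon e n, inG w ->
     (preceq w (mpow (lambda e n) k) <-> preceq_r w (mpow (lambda e n) k))).
Proof.
have hk : ((k%:R)%R : 'Z_e) != 0%R.
  apply/eqP => h; have := val_Zp_nat he k; rewrite h modn_small; last by lia.
  move=> /= h0; lia.
have hL := inG_L e hn k.
split => w hw.
  apply: (iff_trans (preceqE hn hw hL)).
  apply: iff_sym; apply: (iff_trans (inD_iff k hw)); apply: iff_sym.
  apply: (iff_trans _ (Bad0 k w)); rewrite (main_eq1 hn hk w); split; lia.
apply: (iff_trans (preceqE hn hw hL)); apply: iff_sym.
apply: (iff_trans (preceq_rE hn hw hL)).
rewrite (main_eq1 hn hk w) (main_eq2 hn hk w); split; lia.
Qed.
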